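(* The standard parabolic faces of $\mathbf P$ are in bijection with the connected subdiagrams of the extended Dynkin diagram that contain $\{-\lambda\}$, via $F_I\mapsto$ the connected component containing $\{-\lambda\}$ of the induced subdiagram on $\{\alpha_j\mid j\notin I\}\cup\{-\lambda\}$ (whose set of simple-root vertices is indexed by $\overline I^0$). This bijection is an isomorphism of posets, where faces and subdiagrams are both ordered by inclusion.
   Context: Let $\mathfrak g$ be a finite-dimensional complex simple Lie algebra with root system $\Phi$, base $\Pi=\{\alpha_1,\dots,\alpha_n\}$, Weyl group $W$; $E$ is the real span of $\Pi$ with $W$-invariant inner product $(\cdot,\cdot)$. Fix a dominant integral weight $\lambda=\sum_i m_i\alpha_i$; for $x\in E$, $c_i(x)$ is the coefficient of $\alpha_i$ in $x$. Weight polytope $\mathbf P=\mathrm{conv}(W\lambda)$. For $I\subseteq\{1,\dots,n\}$, $F_I=\{x\in\mathbf P\mid c_i(x)=m_i\ \forall i\in I\}$ ($F_\emptyset=\mathbf P$); a face of $\mathbf P$ is standard parabolic if it equals $F_I$ for some $I$ (i.e. it is an intersection of the coordinate faces $F_{\{i\}}$). The extended Dynkin diagram is the Dynkin diagram of $\Pi$ with an additional node $\{-\lambda\}$ joined by a single edge to $\alpha_i$ iff $(\lambda,\alpha_i)>0$; subdiagrams are induced subdiagrams on vertex subsets. $\overline I^0$ denotes the set of indices $j$ with $\alpha_j$ in the connected component containing $\{-\lambda\}$ of the induced subdiagram on $\{\alpha_j\mid j\notin I\}\cup\{-\lambda\}$. *)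

(* Defs.v *)
(* Encoding of the root-system data of a finite-dimensional
   complex simple Lie algebra via the Gram matrix of its simple roots. *)
From HB Require Import structures.
From mathcomp Require Import all_boot all_order all_algebra.
From mathcomp Require Import reals.
Set Implicit Arguments.
Unset Strict Implicit.
Unset Printing Implicit Defensive.
Import Order.TTheory GRing.Theory Num.Theory.
Local Open Scope ring_scope.

Section Defs.
Variables (R : realType) (n : nat).

(* E = R^n, coordinates w.r.t. the base Pi = {alpha_1..alpha_n};
   c_i(x) = x 0 i.  alpha i is the i-th simple root. *)
Definition alpha (i : 'I_n) : 'rV[R]_n := delta_mx 0 i.

(* W-invariant inner product, given by the Gram matrix B i j = (alpha_i, alpha_j). *)
Definition ip (B : 'M[R]_n) (x y : 'rV[R]_n) : R := (x *m B *m y^T) 0 0.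

Definition connected_in (T : finType) (e : rel T) (S : {set T}) : Prop :=
  forall A : {set T}, A \subset S -> A != set0 -> A != S ->
    exists x y, [/\ x \in A, y \in S :\: A & e x y].

Definition dynkin_edge (B : 'M[R]_n) : rel 'I_n :=
  fun i j => (i != j) && (B i j != 0).

(* B is the Gram matrix of the base of the root system of a finite-dimensional
   complex simple Lie algebra: symmetric, positive definite, Cartan integers
   2(a_i,a_j)/(a_j,a_j) nonpositive integers off the diagonal, and connected
   Dynkin diagram (n >= 1).  *)
Definition simple_gram (B : 'M[R]_n) : Prop :=
  [/\ (0 < n)%N, B^T = B,
      (forall x : 'rV[R]_n, x != 0 -> 0 < ip B x x),
      (forall i j : 'I_n, i != j -> exists k : nat, 2 * B i j / B j j = - k%:R)
    & connected_in (dynkin_edge B) [set: 'I_n]].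

Definition dominant_integral (B : 'M[R]_n) (lam : 'rV[R]_n) : Prop :=
  forall i : 'I_n, exists k : nat,
    2 * ip B lam (alpha i) / ip B (alpha i) (alpha i) = k%:R.

Definition sref (B : 'M[R]_n) (i : 'I_n) (x : 'rV[R]_n) : 'rV[R]_n :=
  x - (2 * ip B x (alpha i) / ip B (alpha i) (alpha i)) *: alpha i.

(* The Weyl orbit W lam (W is generated by the simple reflections). *)
Inductive weyl_orbit (B : 'M[R]_n) (lam : 'rV[R]_n) : 'rV[R]_n -> Prop :=
  | wo_base : weyl_orbit B lam lam
  | wo_step : forall i x, weyl_orbit B lam x -> weyl_orbit B lam (sref B i x).

Definition conv (S : 'rV[R]_n -> Prop) (x : 'rV[R]_n) : Prop :=
  exists (m : nat) (p : 'I_m -> 'rV[R]_n) (t : 'I_m -> R),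
    [/\ forall k, S (p k), forall k, 0 <= t k, \sum_(k < m) t k = 1
      & x = \sum_(k < m) t k *: p k].

Definition wpoly (B : 'M[R]_n) (lam : 'rV[R]_n) : 'rV[R]_n -> Prop :=
  conv (weyl_orbit B lam).

(* F_I = {x in P | c_i(x) = m_i for all i in I}, where lam = sum m_i alpha_i *)
Definition face (B : 'M[R]_n) (lam : 'rV[R]_n) (I : {set 'I_n}) (x : 'rV[R]_n)
  : Prop := wpoly B lam x /\ forall i, i \in I -> x 0 i = lam 0 i.

(* Extended Dynkin diagram: vertices option 'I_n, None = {-lam};
   None -- alpha_i iff (lam, alpha_i) > 0. *)
Definition ext_edge (B : 'M[R]_n) (lam : 'rV[R]_n) : rel (option 'I_n) :=
  fun u v => match u, v with
  | Some i, Some j => dynkin_edge B i j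
  | Some i, None | None, Some i => 0 < ip B lam (alpha i)
  | None, None => false
  end.

Definition compl_vertices (I : {set 'I_n}) : {set option 'I_n} :=
  [set v | if v is Some j then j \notin I else true].

(* vertex set of the connected component containing {-lam} of that subdiagram
   (its simple-root vertices are indexed by \overline I^0) *)
Definition diag_comp (B : 'M[R]_n) (lam : 'rV[R]_n) (I : {set 'I_n})
  : {set option 'I_n} :=
  let V := compl_vertices I in
  [set v | connect [rel x y | [&& x \in V, y \in V & ext_edge B lam x y]] None v].

End Defs.

(* Main.v *)
Require Import Defs.
From HB Require Import structures.
From mathcomp Require Import all_boot all_order all_algebra.
From mathcomp Require Import reals ring lra.
Import Order.TTheory GRing.Theory Num.Theory.
Local Open Scope ring_scope.
Set Implicit Arguments.
Unset Strict Implicit.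
Unset Printing Implicit Defensive.

Section Dev.
Variables (R : realType) (n : nat) (B : 'M[R]_n).
Hypothesis Bsym : B^T = B.
Hypothesis Bpd : forall x : 'rV[R]_n, x != 0 -> 0 < ip B x x.
Hypothesis Bcart : forall i j : 'I_n, i != j -> exists k : nat, 2 * B i j / B j j = - k%:R.

Local Notation a := (alpha R).
Local Notation "<< x , y >>" := (ip B x y).

Lemma ipE x y : <<x, y>> = \sum_i \sum_j x 0 i * B i j * y 0 j.
Proof.
rewrite /ip mxE.
under eq_bigr => j _ do rewrite mxE big_distrl.
rewrite exchange_big /=; apply: eq_bigr => i _; apply: eq_bigr => j _.
by rewrite !mxE.
Qed.

Lemma ipC x y : <<x, y>> = <<y, x>>.
Proof.
rewrite !ipE exchange_big; apply: eq_bigr => i _; apply: eq_bigr => j _.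
have -> : B j i = B i j by move: (congr1 (fun M : 'M_n => M i j) Bsym); rewrite mxE.
ring.
Qed.

Lemma ipDl x y z : <<x + y, z>> = <<x, z>> + <<y, z>>.
Proof. by rewrite /ip !mulmxDl mxE. Qed.

Lemma ipZl c x z : <<c *: x, z>> = c * <<x, z>>.
Proof. by rewrite /ip -!scalemxAl mxE. Qed.

Lemma ipNl x z : <<- x, z>> = - <<x, z>>.
Proof. by rewrite -scaleN1r ipZl mulN1r. Qed.

Lemma ipBl x y z : <<x - y, z>> = <<x, z>> - <<y, z>>.
Proof. by rewrite ipDl ipNl. Qed.

Lemma ipDr x y z : <<z, x + y>> = <<z, x>> + <<z, y>>.
Proof. by rewrite ipC ipDl !(ipC _ z). Qed.
Lemma ipZr c x z : <<z, c *: x>> = c * <<z, x>>.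
Proof. by rewrite ipC ipZl ipC. Qed.
Lemma ipBr x y z : <<z, x - y>> = <<z, x>> - <<z, y>>.
Proof. by rewrite ipC ipBl !(ipC _ z). Qed.

Lemma aE (i j : 'I_n) : a i 0 j = (j == i)%:R.
Proof. by rewrite mxE eqxx. Qed.

Lemma ip_a x (i : 'I_n) : <<x, a i>> = \sum_k x 0 k * B k i.
Proof.
rewrite ipE; apply: eq_bigr => k _.
rewrite (bigD1 i) //= aE eqxx mulr1 big1 ?addr0 // => j /negPf ji.
by rewrite aE ji mulr0.
Qed.

Lemma ip_aa (i j : 'I_n) : <<a i, a j>> = B i j.
Proof.
rewrite ip_a (bigD1 i) //= aE eqxx mul1r big1 ?addr0 // => k /negPf ki.
by rewrite aE ki mul0r.
Qed.

Lemma Bii_gt0 (i : 'I_n) : 0 < B i i.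
Proof.
rewrite -ip_aa; apply: Bpd; apply/eqP => /matrixP /(_ 0 i).
by rewrite aE eqxx mxE; apply/eqP; rewrite oner_eq0.
Qed.

Lemma Bii_neq0 (i : 'I_n) : B i i != 0.
Proof. by rewrite gt_eqF ?Bii_gt0. Qed.

Lemma Boff_le0 (i j : 'I_n) : i != j -> B i j <= 0.
Proof.
move=> /Bcart [k hk].
have hB := Bii_gt0 j.
have -> : B i j = (2 * B i j / B j j) * B j j / 2.
  by field; rewrite Bii_neq0.
rewrite hk mulNr mulNr oppr_le0 divr_ge0 // mulr_ge0 // ltW //.
Qed.

Lemma cart_int (i j : 'I_n) : 2 * B i j / B j j \is a Num.int.
Proof.
case: (eqVneq i j) => [->|ij].
  by rewrite mulfK ?Bii_neq0 // rpred_nat.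
by have [k ->] := Bcart ij; rewrite rpredN rpred_nat.
Qed.


Definition coef x i := 2 * <<x, a i>> / B i i.

Lemma srefE x i : sref B i x = x - coef x i *: a i.
Proof. by rewrite /sref ip_aa. Qed.

Lemma sref_coord x i l : sref B i x 0 l = x 0 l - coef x i * (l == i)%:R.
Proof. by rewrite srefE !mxE eqxx. Qed.

Lemma sref_coord_ne x i l : l != i -> sref B i x 0 l = x 0 l.
Proof. by move=> /negPf h; rewrite sref_coord h mulr0 subr0. Qed.

Lemma coefD x y i : coef (x + y) i = coef x i + coef y i.
Proof. by rewrite /coef ipDl; field; rewrite Bii_neq0. Qed.
Lemma coefZ c x i : coef (c *: x) i = c * coef x i.
Proof. by rewrite /coef ipZl; field; rewrite Bii_neq0. Qed.
Lemma coefB x y i : coef (x - y) i = coef x i - coef y i.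
Proof. by rewrite /coef ipBl; field; rewrite Bii_neq0. Qed.
Lemma coef_a i : coef (a i) i = 2.
Proof. by rewrite /coef ip_aa; field; rewrite Bii_neq0. Qed.

Lemma srefD x y i : sref B i (x + y) = sref B i x + sref B i y.
Proof. by rewrite !srefE coefD scalerDl; rewrite addrACA opprD. Qed.
Lemma srefZ c x i : sref B i (c *: x) = c *: sref B i x.
Proof. by rewrite !srefE coefZ scalerBr scalerA. Qed.
Lemma srefB x y i : sref B i (x - y) = sref B i x - sref B i y.
Proof. by rewrite srefD -scaleN1r srefZ scaleN1r. Qed.

Lemma sref_a (i : 'I_n) : sref B i (a i) = - a i.
Proof.
rewrite srefE coef_a -{1}[a i]scale1r -scalerBl -scaleN1r; congr (_ *: _).
by rewrite (_ : 2 = 1 + 1) // opprD addrA subrr add0r.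
Qed.

Lemma sref_invol x i : sref B i (sref B i x) = x.
Proof.
rewrite [sref B i x]srefE srefB srefZ sref_a scalerN opprK.
by rewrite srefE subrK.
Qed.

Lemma ip_sref x y i : <<sref B i x, sref B i y>> = <<x, y>>.
Proof.
rewrite !srefE ipBl !ipBr !ipZl !ipZr ip_aa (ipC (a i) y) /coef.
by field; exact: Bii_neq0.
Qed.

Fixpoint act (w : seq 'I_n) x := if w is i :: w' then sref B i (act w' x) else x.

Lemma act_rcons w j x : act (rcons w j) x = act w (sref B j x).
Proof. by elim: w => //= i w ->. Qed.
Lemma actD w x y : act w (x + y) = act w x + act w y.
Proof. by elim: w => //= i w ->; rewrite srefD. Qed.
Lemma actZ w c x : act w (c *: x) = c *: act w x.
Proof. by elim: w => //= i w ->; rewrite srefZ. Qed.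
Lemma actB w x y : act w (x - y) = act w x - act w y.
Proof. by elim: w => //= i w ->; rewrite srefB. Qed.
Lemma act_ip w x y : <<act w x, act w y>> = <<x, y>>.
Proof. by elim: w => //= i w <-; rewrite ip_sref. Qed.

Lemma orbit_act lam x : weyl_orbit B lam x <-> exists w, x = act w lam.
Proof.
split.
  elim=> [|i y _ [w ->]]; first by exists [::].
  by exists (i :: w).
by case=> w ->; elim: w => [|i w IH] /=; [exact: wo_base | exact: wo_step].
Qed.


Lemma Bsym_e (i j : 'I_n) : B i j = B j i.
Proof. by move: (congr1 (fun M : 'M_n => M j i) Bsym); rewrite mxE. Qed.

Definition isX (x : 'rV[R]_n) :=
  [/\ forall j, x 0 j \is a Num.int, forall j, x 0 j * B j j / <<x, x>> \is a Num.int
    & 0 < <<x, x>>].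

Lemma coef_int (x : 'rV[R]_n) (i : 'I_n) : (forall j, x 0 j \is a Num.int) -> coef x i \is a Num.int.
Proof.
move=> hx; rewrite /coef ip_a mulr_sumr mulr_suml; apply: rpred_sum => k _.
rewrite (_ : _ / _ = x 0 k * (2 * B k i / B i i)); last by field; exact: Bii_neq0.
by rewrite rpredM ?cart_int.
Qed.

Lemma X_sref (x : 'rV[R]_n) (i : 'I_n) : isX x -> isX (sref B i x).
Proof.
case=> hc hd hN; split; last by rewrite ip_sref.
- by move=> l; rewrite sref_coord rpredB // rpredM ?rpred_nat // coef_int.
move=> l; rewrite ip_sref sref_coord; case: (eqVneq l i) => [->|li]; last first.
  by rewrite mulr0 subr0.
rewrite mulr1 (_ : _ / _ = x 0 i * B i i / <<x, x>> - 2 * <<x, a i>> / <<x, x>>); last first.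
  by rewrite /coef; field; rewrite Bii_neq0 gt_eqF.
rewrite rpredB // ip_a mulr_sumr mulr_suml; apply: rpred_sum => k _.
rewrite (_ : _ / _ = (x 0 k * B k k / <<x, x>>) * (2 * B i k / B k k)).
  by rewrite rpredM ?cart_int.
by rewrite Bsym_e; field; rewrite Bii_neq0 gt_eqF.
Qed.

Lemma X_a (j : 'I_n) : isX (a j).
Proof.
split; first by move=> l; rewrite aE rpred_nat.
  move=> l; rewrite ip_aa aE; case: (eqVneq l j) => [->|_].
    by rewrite mul1r divff ?Bii_neq0.
  by rewrite !mul0r rpred0.
by rewrite ip_aa Bii_gt0.
Qed.

Lemma X_act w (j : 'I_n) : isX (act w (a j)).
Proof. by elim: w => [|i w IH] /=; [exact: X_a | exact: X_sref]. Qed.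

Lemma int_ge1 (q : R) : q \is a Num.int -> 0 < q -> 1 <= q.
Proof. by move=> hq hq0; rewrite -(gtr0_norm hq0) norm_intr_ge1 // gt_eqF. Qed.

Lemma sum_pairs (f : 'I_n -> 'I_n -> R) : (forall i j, f i j = f j i) ->
  \sum_(i : 'I_n) \sum_(j : 'I_n) f i j =
  \sum_(i : 'I_n) f i i + \sum_(i : 'I_n) \sum_(j : 'I_n) (if (i < j)%N then 2 * f i j else 0).
Proof.
move=> fs.
have e1 (i : 'I_n) : \sum_(j : 'I_n) f i j = f i i + \sum_(j : 'I_n) (if (i < j)%N then f i j else 0)
                           + \sum_(j : 'I_n) (if (j < i)%N then f i j else 0).
  rewrite (bigD1 i) //= -addrA -big_split /=; congr (_ + _).
  rewrite big_mkcond; apply: eq_bigr => j _ /=.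
  case: ltngtP => h.
  - by rewrite gt_eqF ?addr0.
  - by rewrite lt_eqF ?add0r.
  - by rewrite (_ : j = i) ?eqxx ?addr0 //; apply: val_inj.
rewrite (eq_bigr _ (fun i _ => e1 i)) !big_split /= -addrA; congr (_ + _).
rewrite [X in _ + X = _]exchange_big /= -big_split /=; apply: eq_bigr => i _.
rewrite -big_split /=; apply: eq_bigr => j _.
by case: ifP => _; rewrite ?addr0 // (fs j i); ring.
Qed.

Lemma L_int (y : 'rV[R]_n) (N : R) : N != 0 ->
  (forall j, y 0 j \is a Num.int) -> (forall j, y 0 j * B j j / N \is a Num.int) ->
  <<y, y>> / N \is a Num.int.
Proof.
move=> hN hc hd.
rewrite ipE mulr_suml.
under eq_bigr => i _ do rewrite mulr_suml.
rewrite (sum_pairs (f := fun i j => y 0 i * B i j * y 0 j / N)); last first.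
  by move=> i j; rewrite Bsym_e; ring.
apply: rpredD; apply: rpred_sum => i _.
  rewrite (_ : _ / _ = y 0 i * (y 0 i * B i i / N)); first by rewrite rpredM.
  by field.
apply: rpred_sum => j _; case: ifP => _; last exact: rpred0.
rewrite (_ : _ * _ = y 0 i * (y 0 j * B j j / N) * (2 * B i j / B j j)).
  by rewrite rpredM ?cart_int // rpredM.
by field; rewrite hN Bii_neq0.
Qed.


Definition rest (S : {set 'I_n}) (x : 'rV[R]_n) : 'rV[R]_n :=
  \row_j (if j \in S then x 0 j else 0).

Lemma rest_split S x : x = rest S x + rest (~: S) x.
Proof.
by apply/rowP => j; rewrite !mxE inE; case: (j \in S); rewrite ?addr0 ?add0r.
Qed.

Lemma X_split (x : 'rV[R]_n) (S : {set 'I_n}) : isX x ->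
  0 <= <<rest S x, rest (~: S) x>> -> rest S x = 0 \/ rest (~: S) x = 0.
Proof.
case=> hc hd hN hyz.
have eN : <<x, x>> = <<rest S x, rest S x>> + <<rest (~: S) x, rest (~: S) x>>
    + 2 * <<rest S x, rest (~: S) x>>.
  by rewrite {1 2}(rest_split S x) ipDl !ipDr (ipC (rest (~: S) x) (rest S x)); ring.
have key (T : {set 'I_n}) : rest T x != 0 -> <<x, x>> <= <<rest T x, rest T x>>.
  move=> hu.
  have q : <<rest T x, rest T x>> / <<x, x>> \is a Num.int.
    apply: L_int; first by rewrite gt_eqF.
      by move=> j; rewrite mxE; case: ifP => _ //; rewrite rpred0.
    by move=> j; rewrite mxE; case: ifP => _ //; rewrite !mul0r rpred0.
  have := int_ge1 q (divr_gt0 (Bpd hu) hN).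
  by rewrite ler_pdivlMr // mul1r.
case: (eqVneq (rest S x) 0) => [->|h1]; first by left.
case: (eqVneq (rest (~: S) x) 0) => [->|h2]; first by right.
exfalso; move: (key S h1) (key (~: S) h2); clear -eN hN hyz; lra.
Qed.

Lemma X_sign (x : 'rV[R]_n) : isX x -> (forall j, 0 <= x 0 j) \/ (forall j, x 0 j <= 0).
Proof.
move=> hX; set S := [set j | 0 < x 0 j].
have : 0 <= <<rest S x, rest (~: S) x>>.
  rewrite ipE; apply: sumr_ge0 => i _; apply: sumr_ge0 => j _; rewrite !mxE !inE.
  case: (ltrP 0 (x 0 i)) => hi; case: (ltrP 0 (x 0 j)) => hj /=;
    rewrite ?mul0r ?mulr0 //.
  have ij : i != j by apply/eqP => e; move: hi; rewrite e; move: hj; case: leP.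
  apply: mulr_le0 => //; apply: mulr_ge0_le0; [exact: ltW | exact: Boff_le0].
case/(X_split hX) => /rowP h; [right|left] => j; move: (h j); rewrite !mxE !inE.
  by case: (ltrP 0 (x 0 j)) => hj //= h0; rewrite h0 ltxx in hj.
by case: (ltrP 0 (x 0 j)) => hj //= h0; [exact: ltW | rewrite h0].
Qed.

Lemma deletion w (j : 'I_n) : (forall l, act w (a j) 0 l <= 0) ->
  exists w', (size w' < size w)%N /\ forall x, act w (sref B j x) = act w' x.
Proof.
elim: w => [|i w IH] /= hneg.
  by move: (hneg j); rewrite aE eqxx ler10.
case: (X_sign (X_act w j)) => [hpos|hn]; last first.
  have [w' [hs hw']] := IH hn.
  by exists (i :: w'); split => //= x; rewrite hw'.
set g := act w (a j) in hpos hneg *.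
have hgi : g = g 0 i *: a i.
  apply/rowP => l; rewrite !mxE eqxx /=.
  case: (eqVneq l i) => [->|li]; first by rewrite mulr1.
  rewrite mulr0; apply/eqP; rewrite eq_le hpos andbT.
  by move: (hneg l); rewrite sref_coord_ne.
have gN : <<g, g>> = B j j by rewrite /g act_ip ip_aa.
have c0 : g 0 i != 0.
  apply/eqP => c0; move: (Bii_gt0 j); rewrite -gN hgi c0 scale0r.
  by rewrite ipE big1 ?ltxx // => k _; rewrite big1 // => l _; rewrite mxE !mul0r.
have conj y : act w (sref B j y) = sref B i (act w y).
  rewrite srefE actB actZ -/g [sref B i _]srefE; congr (_ - _).
  rewrite {1}hgi scalerA; congr (_ *: _).
  rewrite /coef -gN -(act_ip w y (a j)) -/g.
  rewrite [in <<_, g>>]hgi [in <<g, g>>]hgi ipZr ipZl ipZr ip_aa.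
  by field; rewrite c0 Bii_neq0.
exists w; split => // x.
by rewrite conj sref_invol.
Qed.

Lemma ip_expand x y : <<x, y>> = \sum_b y 0 b * <<x, a b>>.
Proof.
rewrite ipE exchange_big /=; apply: eq_bigr => b _.
by rewrite ip_a mulr_sumr; apply: eq_bigr => k _; ring.
Qed.


Variable lam : 'rV[R]_n.
Hypothesis lamdom : forall i, 0 <= <<lam, a i>>.

Lemma coef_lam_ge0 j : 0 <= coef lam j.
Proof. by rewrite /coef divr_ge0 ?mulr_ge0 ?lamdom // ltW ?Bii_gt0. Qed.

Lemma KLB (I D : {set 'I_n}) :
  (forall p q, p \in D -> q \notin D -> q \notin I -> B p q = 0) ->
  (forall q, q \notin D -> q \notin I -> <<lam, a q>> = 0) ->
  forall w, (forall j, act w lam 0 j <= lam 0 j) /\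
    ((forall i, i \in I -> act w lam 0 i = lam 0 i) ->
       forall j, j \notin D -> act w lam 0 j = lam 0 j).
Proof.
move=> F1 F2 w.
suff: forall m w, (size w <= m)%N -> (forall j, act w lam 0 j <= lam 0 j) /\
    ((forall i, i \in I -> act w lam 0 i = lam 0 i) ->
       forall j, j \notin D -> act w lam 0 j = lam 0 j) by apply.
elim=> [|m IH] {}w.
  by rewrite leqn0 => /nilP -> /=.
case/lastP: w => [_|w j]; first by [].
rewrite size_rcons ltnS => hs.
rewrite act_rcons.
case: (X_sign (X_act w j)) => [hpos|hneg]; last first.
  have [w' [hs' ->]] := deletion hneg.
  by apply: IH; rewrite (leq_trans _ hs) // ltnW.
have [hle hB] := IH w hs.
set g := act w (a j) in hpos *.
set k := coef lam j.
have e : act w (sref B j lam) = act w lam - k *: g by rewrite srefE actB actZ.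
have hk : 0 <= k := coef_lam_ge0 j.
have ec l : act w (sref B j lam) 0 l = act w lam 0 l - k * g 0 l by rewrite e !mxE.
split=> [l|hI l hl]; rewrite ec.
  by have := hle l; have := mulr_ge0 hk (hpos l); lra.
have hI' i : i \in I -> act w lam 0 i = lam 0 i /\ k * g 0 i = 0.
  move=> iI; have := hI i iI; rewrite ec; have := hle i; have := hpos i.
  have := mulr_ge0 hk (hpos i); move=> h1 h2 h3 h4; split; lra.
have hB' := hB (fun i iI => (hI' i iI).1).
rewrite hB' //.
have [k0|kpos] := eqVneq k 0; first by rewrite k0 mul0r subr0.
have gI i : i \in I -> g 0 i = 0.
  move=> iI; have := (hI' i iI).2; move/eqP; rewrite mulf_eq0 (negPf kpos) /=.
  by move/eqP.
have hsplit : 0 <= <<rest D g, rest (~: D) g>>.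
  rewrite ipE; apply: sumr_ge0 => p _; apply: sumr_ge0 => q _.
  rewrite !mxE !inE; case: ifP => pD; rewrite ?mul0r //.
  case: ifP => qD; rewrite ?mulr0 //.
  case: (boolP (q \in I)) => qI; first by rewrite (gI q) // mulr0.
  by rewrite F1 ?pD ?qD // mulr0 mul0r.
case: (X_split (X_act w j) hsplit) => /rowP hr; last first.
  by move: (hr l); rewrite !mxE inE hl /= => ->; rewrite mulr0 subr0.
exfalso.
have kp : 0 < <<lam, a j>>.
  rewrite lt_def lamdom andbT; apply: contra kpos => /eqP h.
  by rewrite /k /coef h mulr0 mul0r.
have : <<act w lam, g>> = 0.
  rewrite ip_expand big1 // => q _.
  have [gq0|gq] := eqVneq (g 0 q) 0; first by rewrite gq0 mul0r.
  have qD : q \notin D.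
    by apply: contra gq => qD; move: (hr q); rewrite !mxE qD => ->.
  have qI : q \notin I by apply: contra gq => qI; rewrite gI.
  have e2 : <<act w lam, a q>> = <<lam, a q>>.
    rewrite !ip_a; apply: eq_bigr => p _.
    case: (boolP (p \in D)) => pD; first by rewrite F1 // !mulr0.
    by rewrite hB'.
  by rewrite e2 F2 // mulr0.
by rewrite /g act_ip => h; move: kp; rewrite h ltxx.
Qed.


Lemma KL x : weyl_orbit B lam x -> forall j, x 0 j <= lam 0 j.
Proof.
case/orbit_act => w ->.
have F1 : forall p q : 'I_n, p \in [set: 'I_n] -> q \notin [set: 'I_n] ->
    q \notin [set: 'I_n] -> B p q = 0 by move=> p q _; rewrite inE.
have F2 : forall q : 'I_n, q \notin [set: 'I_n] -> q \notin [set: 'I_n] ->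
    <<lam, a q>> = 0 by move=> q; rewrite inE.
by case: (KLB F1 F2 w).
Qed.

Lemma coord_sum m (t : 'I_m -> R) (p : 'I_m -> 'rV[R]_n) j :
  (\sum_k t k *: p k) 0 j = \sum_k t k * p k 0 j.
Proof. by rewrite summxE; apply: eq_bigr => k _; rewrite mxE. Qed.

Lemma face_coord (I D : {set 'I_n}) :
  (forall p q, p \in D -> q \notin D -> q \notin I -> B p q = 0) ->
  (forall q, q \notin D -> q \notin I -> <<lam, a q>> = 0) ->
  forall x, face B lam I x -> forall j, j \notin D -> x 0 j = lam 0 j.
Proof.
move=> F1 F2 x [[m [p [t [hp ht ht1 ->]]]] hI] j hj.
have hp' k : exists w, p k = act w lam by apply/orbit_act.
have zero i : i \in I -> forall k, t k * (lam 0 i - p k 0 i) = 0.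
  move=> iI k; apply: (@psumr_eq0P _ _ xpredT (fun k => t k * (lam 0 i - p k 0 i))) => //.
    move=> k' _; apply: mulr_ge0 => //; rewrite subr_ge0; exact: KL.
  under eq_bigr => k' _ do rewrite mulrBr.
  by rewrite sumrB -mulr_suml ht1 mul1r -coord_sum hI // subrr.
rewrite coord_sum -[lam 0 j]mul1r -ht1 mulr_suml; apply: eq_bigr => k _.
have [->|tk] := eqVneq (t k) 0; first by rewrite !mul0r.
have [w ew] := hp' k.
have [_ hB] := KLB F1 F2 w.
rewrite ew hB //= => i iI.
have := zero i iI k; move/eqP; rewrite mulf_eq0 (negPf tk) subr_eq0 ew /=.
by move/eqP.
Qed.


Lemma connect_ind_gen (T : finType) (e : rel T) (x : T) (P : T -> Prop) :
  P x -> (forall u v, connect e x u -> e u v -> P u -> P v) ->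
  forall y, connect e x y -> P y.
Proof.
move=> Px step y /connectP [p]; elim/last_ind: p y => [|p z IH] y /=.
  by move=> _ ->.
rewrite rcons_path last_rcons => /andP [hp he] ->.
apply: (step (last x p)) => //; last exact: IH.
by apply/connectP; exists p.
Qed.

Definition eI (I : {set 'I_n}) : rel (option 'I_n) :=
  [rel x y | [&& x \in compl_vertices I, y \in compl_vertices I & ext_edge B lam x y]].

Lemma in_diag (I : {set 'I_n}) v : (v \in diag_comp B lam I) = connect (eI I) None v.
Proof. by rewrite inE. Qed.

Lemma ext_edge_sym u v : ext_edge B lam u v = ext_edge B lam v u.
Proof.
by case: u => [i|]; case: v => [j|] //=; rewrite /dynkin_edge eq_sym Bsym_e.
Qed.

Lemma None_V (I : {set 'I_n}) : None \in compl_vertices I.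
Proof. by rewrite inE. Qed.

Lemma Some_V (I : {set 'I_n}) j : (Some j \in compl_vertices I) = (j \notin I).
Proof. by rewrite inE. Qed.

Lemma comp_sub (I : {set 'I_n}) v : connect (eI I) None v -> v \in compl_vertices I.
Proof.
move=> h; apply: (connect_ind_gen (P := fun v => v \in compl_vertices I)) h.
  exact: None_V.
by move=> u w _ /and3P [].
Qed.

Lemma cut (T : finType) (e : rel T) (A : {set T}) x y :
  connect e x y -> x \in A -> y \notin A ->
  exists u v, [/\ u \in A, v \notin A, e u v, connect e x u & connect e x v].
Proof.
move=> hc hx hy.
suff : y \in A \/ exists u v, [/\ u \in A, v \notin A, e u v, connect e x u & connect e x v].
  by case=> //; rewrite (negPf hy).
apply: (connect_ind_gen (P := fun y => y \in A \/ exists u v,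
  [/\ u \in A, v \notin A, e u v, connect e x u & connect e x v])) hc.
  by left.
move=> u v hu huv [uA|]; last by right.
case: (boolP (v \in A)) => vA; first by left.
right; exists u, v; split => //.
by apply: connect_trans hu (connect1 huv).
Qed.

Lemma wpoly_orbit x : weyl_orbit B lam x -> wpoly B lam x.
Proof.
move=> hx; exists 1%N, (fun _ => x), (fun _ => 1); split => //.
  by rewrite big_ord1.
by rewrite big_ord1 scale1r.
Qed.

Lemma Gpath (I : {set 'I_n}) v : connect (eI I) None v ->
  exists x, [/\ weyl_orbit B lam x, (forall i, i \in I -> x 0 i = lam 0 i)
    & forall j, v = Some j -> x 0 j < lam 0 j].
Proof.
move=> h; apply: (connect_ind_gen (P := fun v => exists x, [/\ weyl_orbit B lam x,
  (forall i, i \in I -> x 0 i = lam 0 i) & forall j, v = Some j -> x 0 j < lam 0 j])) h.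
  by exists lam; split => //; exact: wo_base.
move=> u v0 _ /and3P [_ hv he] [x [hx hxI hxu]].
case: v0 hv he => [k|] hv he; last by exists x.
rewrite Some_V in hv.
have [xk|xk] := ltrP (x 0 k) (lam 0 k); first by exists x; split => // j [<-].
have exk : x 0 k = lam 0 k by apply/eqP; rewrite eq_le xk KL.
have term p : 0 <= (x 0 p - lam 0 p) * B p k.
  have [->|pk] := eqVneq p k; first by rewrite exk subrr mul0r.
  by apply: mulr_le0; [rewrite subr_le0 KL | exact: Boff_le0].
have ediff : <<x, a k>> - <<lam, a k>> = \sum_p (x 0 p - lam 0 p) * B p k.
  by rewrite !ip_a -sumrB; apply: eq_bigr => p _; rewrite mulrBl.
have pos : 0 < <<x, a k>>.
  have := lamdom k.
  case: u hxu he => [j|] hxu /= he; last first.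
    have hs : 0 <= \sum_p (x 0 p - lam 0 p) * B p k.
      by apply: sumr_ge0 => p _; exact: term.
    by rewrite -ediff in hs; lra.
  move: he; rewrite /dynkin_edge => /andP [jk Bjk].
  have Bneg : B j k < 0 by rewrite lt_neqAle Bjk Boff_le0.
  have xj := hxu j erefl.
  have : (x 0 j - lam 0 j) * B j k <= <<x, a k>> - <<lam, a k>>.
    rewrite ediff (bigD1 j) //= lerDl; apply: sumr_ge0 => p _; exact: term.
  have : 0 < (x 0 j - lam 0 j) * B j k by rewrite nmulr_lgt0 // subr_lt0.
  lra.
exists (sref B k x); split.
- exact: wo_step.
- move=> i iI; rewrite sref_coord_ne ?hxI //.
  by apply: contraNneq hv => <-.
- move=> j [<-]; rewrite sref_coord eqxx mulr1 -exk ltrBlDr ltrDl.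
  by rewrite /coef divr_gt0 ?Bii_gt0 // mulr_gt0.
Qed.


Lemma part1 (I : {set 'I_n}) :
  None \in diag_comp B lam I /\ connected_in (ext_edge B lam) (diag_comp B lam I).
Proof.
split; first by rewrite in_diag connect0.
move=> A sA A0 AS.
case: (boolP (None \in A)) => NA.
  have : diag_comp B lam I :\: A != set0.
    apply/negP => /eqP /eqP; rewrite setD_eq0 => h.
    by move: AS; rewrite eqEsubset sA h.
  case/set0Pn => y; rewrite inE => /andP [yA yD].
  rewrite in_diag in yD.
  have [u [v [uA vA huv _ cv]]] := cut yD NA yA.
  exists u, v; split => //; first by rewrite inE vA in_diag cv.
  by case/and3P: huv.
case/set0Pn: A0 => y yA.
have yD := subsetP sA y yA; rewrite in_diag in yD.
have hN : None \in ~: A by rewrite inE.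
have hy : y \notin ~: A by rewrite inE negbK.
have [u [v [uA vA huv cu _]]] := cut yD hN hy.
exists v, u; split.
- by move: vA; rewrite inE negbK.
- by rewrite in_setD in_diag cu andbT; move: uA; rewrite inE.
- by rewrite ext_edge_sym; case/and3P: huv.
Qed.

Lemma part3 (S : {set option 'I_n}) :
  None \in S -> connected_in (ext_edge B lam) S ->
  exists I : {set 'I_n}, diag_comp B lam I = S.
Proof.
move=> NS hS; exists [set i | Some i \notin S].
have hV : compl_vertices [set i | Some i \notin S] = S.
  by apply/setP => -[j|]; rewrite !inE ?negbK.
have sub1 : diag_comp B lam [set i | Some i \notin S] \subset S.
  by apply/subsetP => v; rewrite in_diag => /comp_sub; rewrite hV.
apply/eqP; rewrite eqEsubset sub1 /=; apply/subsetP => v vS.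
apply/negPn/negP => nv.
have Ne : diag_comp B lam [set i | Some i \notin S] != set0.
  by apply/set0Pn; exists None; rewrite in_diag connect0.
have NeS : diag_comp B lam [set i | Some i \notin S] != S.
  by apply/eqP => e; rewrite e vS in nv.
have [x [y [xA /setDP [yS yA] exy]]] := hS _ sub1 Ne NeS.
move/negP: yA; apply; move: xA; rewrite !in_diag => cx.
have xV := comp_sub cx; rewrite hV in xV.
apply: connect_trans cx (connect1 _).
by apply/and3P; split => //; rewrite hV.
Qed.

Lemma inD (I : {set 'I_n}) p :
  (p \in [set p | Some p \in diag_comp B lam I]) = connect (eI I) None (Some p).
Proof. by rewrite in_set in_diag. Qed.

Lemma part2 (I J : {set 'I_n}) :
  (forall x, face B lam I x -> face B lam J x) <->
  diag_comp B lam I \subset diag_comp B lam J.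
Proof.
split.
  move=> H; apply/subsetP => v; rewrite !in_diag => hv.
  apply: (connect_ind_gen (P := fun v => connect (eI J) None v)) hv; first exact: connect0.
  move=> u w cu huw cuJ; case: w huw => [k|] huw; last exact: connect0.
  case: (boolP (k \in J)) => kJ.
    exfalso.
    have [x [hx hxI hxk]] := Gpath (connect_trans cu (connect1 huw)).
    have [_ hJ] := H x (conj (wpoly_orbit hx) hxI).
    by have := hxk k erefl; rewrite hJ // ltxx.
  have uV := comp_sub cuJ.
  apply: connect_trans cuJ (connect1 _).
  apply/and3P; split; [exact: uV | by rewrite Some_V | by case/and3P: huw].
move=> hsub x [hw hI]; split => // j jJ.
apply: (face_coord (I := I) (D := [set p | Some p \in diag_comp B lam I])).
- move=> p q; rewrite !inD => cp cq qI.
  have [e|pq] := eqVneq p q; first by rewrite -e cp in cq.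
  apply/eqP/negPn/negP => Bpq; move/negP: cq; apply.
  have pV := comp_sub cp.
  apply: connect_trans cp (connect1 _).
  apply/and3P; split; [exact: pV | by rewrite Some_V |].
  by rewrite /= /dynkin_edge pq.
- move=> q; rewrite inD => cq qI.
  apply/eqP; rewrite eq_le lamdom andbT leNgt; apply/negP => hq.
  move/negP: cq; apply; apply: connect1.
  by apply/and3P; split; [exact: None_V | by rewrite Some_V | exact: hq].
- by split.
- rewrite inD; apply/negP => hjI.
  rewrite -in_diag in hjI; have := subsetP hsub _ hjI; rewrite in_diag => /comp_sub.
  by rewrite Some_V jJ.
Qed.

End Dev.

Theorem theorem4p5 (R : realType) (n : nat) (B : 'M[R]_n) (lam : 'rV[R]_n) :
  simple_gram B -> dominant_integral B lam ->
  [/\ (forall I : {set 'I_n},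
         None \in diag_comp B lam I /\ connected_in (ext_edge B lam) (diag_comp B lam I)),
      (forall I J : {set 'I_n},
         (forall x, face B lam I x -> face B lam J x) <->
         diag_comp B lam I \subset diag_comp B lam J)
    & (forall S : {set option 'I_n},
         None \in S -> connected_in (ext_edge B lam) S ->
         exists I : {set 'I_n}, diag_comp B lam I = S)].
Proof.
case=> _ Bsym Bpd Bcart _ hdom.
have lamdom : forall i, 0 <= ip B lam (alpha R i).
  move=> i; have [k hk] := hdom i.
  have : 0 <= 2 * ip B lam (alpha R i) / ip B (alpha R i) (alpha R i) by rewrite hk ler0n.
  rewrite ip_aa pmulr_lge0 ?invr_gt0 ?(Bii_gt0 Bpd) //.
  by rewrite pmulr_rge0.
split.
- by move=> I; apply: part1.
- by move=> I J; apply: part2.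
- by move=> S; apply: part3.
Qed.
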